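(* Let $G$ be a simple directed graph on $[n]$ and let $\sigma\subseteq[n]$. (1) If $\sigma$ is not a clique of $G$, then $\sigma$ is not a stable motif of $W(G,\varepsilon,\delta)$ for any legal $\varepsilon,\delta$ such that $$\delta > \frac{\varepsilon}{1-\varepsilon}\,(|\sigma|^2-|\sigma|-1).$$ (2) If the induced subgraph $G|_\sigma$ has maximum in-degree $d^{in}_{\max}=d<|\sigma|-1$, then $\sigma$ is not a stable motif of $W(G,\varepsilon,\delta)$ for any legal $\varepsilon,\delta$ such that $$\delta>\frac{\varepsilon d}{|\sigma|-1-d}.$$
   Context: Let $G$ be a simple directed graph (no self-loops, no multiple edges) on vertex set $[n]=\{1,\dots,n\}$; $j\to i$ denotes an edge from $j$ to $i$. Parameters $\varepsilon,\delta$ are in the legal range if $\delta>0$ and $0<\varepsilon<\frac{\delta}{\delta+1}$. The combinatorial threshold-linear network (CTLN) $W=W(G,\varepsilon,\delta)$ is the $n\times n$ matrix with $W_{ii}=0$, $W_{ij}=-1+\varepsilon$ if $j\to i$ in $G$, and $W_{ij}=-1-\delta$ if $i\ne j$ and $j\not\to i$; its dynamics are $\dot x_i=-x_i+[\sum_j W_{ij}x_j+\theta]_+$ with $\theta>0$. CTLNs are assumed nondegenerate: $\det(I-W_\sigma)\neq0$ for all $\sigma$ and all Cramer's-rule determinants of $(I-W_\sigma)x=\theta 1_\sigma$ are nonzero. For $\sigma\subseteq[n]$, $W_\sigma$ is the principal submatrix indexed by $\sigma$ (the CTLN of the induced subgraph $G|_\sigma$). $\sigma$ is a permitted motif if $W_\sigma$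 has a fixed point with full support $\sigma$, i.e. $\theta(I-W_\sigma)^{-1}1_\sigma$ has all entries positive; $\sigma$ is a stable motif if it is permitted and all eigenvalues of $I-W_\sigma$ have positive real part. A clique is a set of nodes that are pairwise bidirectionally connected (singletons are cliques). In-degrees in $G|_\sigma$ count edges from nodes of $\sigma$. *)

(* Defs.v *)
From HB Require Import structures.
From mathcomp Require Import all_boot all_order all_algebra.
From mathcomp Require Import complex.
Set Implicit Arguments. Unset Strict Implicit. Unset Printing Implicit Defensive.
Import Order.TTheory GRing.Theory Num.Theory.
Local Open Scope ring_scope.

(* A simple directed graph on 'I_n is an irreflexive relation e;
   [e j i] means the edge j -> i. *)
Definition simple_digraph n (e : rel 'I_n) : Prop := irreflexive e.

Section CTLN.
Variable R : rcfType.

Definition ctln n (e : rel 'I_n) (eps delta : R) : 'M[R]_n :=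
  \matrix_(i, j) (if i == j then 0
                  else if e j i then -1 + eps else -1 - delta).

Definition legal (eps delta : R) : Prop :=
  0 < delta /\ 0 < eps /\ eps < delta / (delta + 1).

Definition subm n (W : 'M[R]_n) (s : {set 'I_n}) : 'M[R]_#|s| :=
  \matrix_(i, j) W (enum_val i) (enum_val j).

Definition ImW n (W : 'M[R]_n) (s : {set 'I_n}) : 'M[R]_#|s| :=
  1%:M - subm W s.

(* matrix of Cramer's rule for (I - W_s) x = theta 1_s, column k replaced *)
Definition cramer_mx n (W : 'M[R]_n) (s : {set 'I_n}) (theta : R)
  (k : 'I_#|s|) : 'M[R]_#|s| :=
  \matrix_(i, j) (if j == k then theta else ImW W s i j).

Arguments cramer_mx {n} W s theta k.

Definition ctln_nondeg n (W : 'M[R]_n) (theta : R) : Prop :=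
  forall s : {set 'I_n}, \det (ImW W s) != 0 /\
    forall k, \det (cramer_mx W s theta k) != 0.

Definition permitted n (W : 'M[R]_n) (s : {set 'I_n}) (theta : R) : Prop :=
  forall i : 'I_#|s|,
    0 < (theta *: (invmx (ImW W s) *m (const_mx 1 : 'cV[R]_#|s|))) i ord0.

Definition eigenC m (A : 'M[R]_m) (lam : R[i]) : bool :=
  root (char_poly (map_mx (fun x : R => x%:C%C) A)) lam.

Definition stable_motif n (W : 'M[R]_n) (s : {set 'I_n}) (theta : R) : Prop :=
  permitted W s theta /\
  forall lam : R[i], eigenC (ImW W s) lam -> 0 < Re lam.
End CTLN.

Definition clique n (e : rel 'I_n) (s : {set 'I_n}) : Prop :=
  forall i j, i \in s -> j \in s -> i != j -> e i j /\ e j i.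

Definition indeg n (e : rel 'I_n) (s : {set 'I_n}) (i : 'I_n) : nat :=
  #|[set j in s | e j i]|.

Definition max_indeg n (e : rel 'I_n) (s : {set 'I_n}) : nat :=
  \max_(i in s) indeg e s i.

(* Main.v *)
Require Import Defs.
From HB Require Import structures.
From mathcomp Require Import all_boot all_order all_algebra.
From mathcomp Require Import complex polyrcf.
From mathcomp.algebra_tactics Require Import ring lra.
Import Order.TTheory GRing.Theory Num.Theory.
Local Open Scope ring_scope.
From mathcomp Require Import zify.
Lemma char_poly_conj (F : fieldType) n (P A : 'M[F]_n) : P \in unitmx ->
  char_poly (P *m A *m invmx P) = char_poly A.
Proof.
move=> uP.
have HP : map_mx (@polyC F) P *m map_mx (@polyC F) (invmx P) = 1%:M.
  by rewrite -map_mxM mulmxV // map_mx1.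
have E : char_poly_mx (P *m A *m invmx P) =
  map_mx polyC P *m char_poly_mx A *m map_mx polyC (invmx P).
  rewrite /char_poly_mx mulmxBr mulmxBl -!map_mxM.
  rewrite scalar_mxC -mulmxA; congr (_ - _).
  by rewrite -mulmxA HP mulmx1.
rewrite /char_poly E !det_mulmx mulrC mulrA -det_mulmx.
have -> : map_mx polyC (invmx P) *m map_mx polyC P = 1%:M :> 'M[{poly F}]_n.
  by rewrite -map_mxM mulVmx // map_mx1.
by rewrite det1 mul1r.
Qed.
Lemma tr_conj (F : fieldType) n (P A : 'M[F]_n) : P \in unitmx ->
  \tr (P *m A *m invmx P) = \tr A.
Proof. by move=> uP; rewrite mxtrace_mulC mulmxA mulVmx // mul1mx. Qed.

Lemma spectral (R : rcfType) k (A : 'M[R]_k) : (0 < k)%N ->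
  exists t : 'I_k -> R[i],
   [/\ char_poly (map_mx (real_complex R) A) = \prod_(i < k) ('X - (t i)%:P),
       (\tr A)%:C%C = \sum_i t i &
       (\tr (A *m A))%:C%C = \sum_i t i ^+ 2].
Proof.
move=> k0; set AC := map_mx (real_complex R) A.
have [P /unitarymx_unit uP] := Schur AC k0.
rewrite /similar_to /= conjumx // => /is_trig_mxP Ttrig.
set T := P *m AC *m invmx P in Ttrig.
exists (fun i => T i i); split.
- rewrite -(char_poly_conj _ _ _ AC uP) char_poly_trig //.
  exact/is_trig_mxP.
- by rewrite -trace_map_mx -/AC -(tr_conj _ _ _ AC uP).
- have -> : (\tr (A *m A))%:C%C = \tr (T *m T).
    rewrite -trace_map_mx map_mxM -/AC /T.
    rewrite -(tr_conj _ _ _ (AC *m AC) uP).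
    by rewrite !mulmxA mulmxKV.
  rewrite /mxtrace; apply: eq_bigr => i _.
  rewrite mxE (bigD1 i) //= big1 ?addr0 ?expr2 // => l li.
  case: (ltngtP i l) => [il|li'|/val_inj eil]; last by rewrite eil eqxx in li.
  + by rewrite Ttrig // mul0r.
  + by rewrite (Ttrig l i) // mulr0.
Qed.
Lemma sum_pos (R : realDomainType) (I : finType) (P : pred I) (F : I -> R) j :
  P j -> (forall i, P i -> 0 <= F i) -> 0 < F j -> 0 < \sum_(i | P i) F i.
Proof.
move=> Pj H Fj; rewrite (bigD1 j) //=.
have : 0 <= \sum_(i | P i && (i != j)) F i by apply: sumr_ge0 => i /andP[/H].
lra.
Qed.

Definition Cstable (R : rcfType) k (A : 'M[R]_k) :=
  forall lam, root (char_poly (map_mx (real_complex R) A)) lam -> 0 < 'Re lam.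
Arguments Cstable {R k}.

Lemma root_prodX (F : idomainType) k (t : 'I_k -> F) j :
  root (\prod_(i < k) ('X - (t i)%:P)) (t j).
Proof.
rewrite /root horner_prod (bigD1 j) //= !hornerE subrr mul0r //.
Qed.

Lemma Re_sqr (R : rcfType) (z : R[i]) :
  complex.Re (z ^+ 2) = complex.Re z ^+ 2 - complex.Im z ^+ 2.
Proof. by case: z => a b; rewrite /= !expr2 /=. Qed.

Lemma stable_E2 (R : rcfType) k (A : 'M[R]_k) : (1 < k)%N -> Cstable A ->
  0 < (\tr A) ^+ 2 - \tr (A *m A).
Proof.
move=> k1 st; have k0 : (0 < k)%N by apply: ltnW.
have [t [ch tr1 tr2]] := spectral _ _ A k0.
have apos : forall i, 0 < complex.Re (t i).
  move=> i; have := st (t i); rewrite ch root_prodX => /(_ isT).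
  by rewrite -complexRe ltcR.
have e1 : \tr A = \sum_i complex.Re (t i).
  by rewrite -raddf_sum -tr1.
have e0 : 0 = \sum_i complex.Im (t i).
  by rewrite -raddf_sum -tr1.
have e2 : \tr (A *m A) = \sum_i (complex.Re (t i) ^+ 2 - complex.Im (t i) ^+ 2).
  by under eq_bigr do rewrite -Re_sqr; rewrite -raddf_sum -tr2.
rewrite e1 e2; set a := fun i => complex.Re (t i).
set b := fun i => complex.Im (t i).
have Hsq : (\sum_i a i) ^+ 2 = \sum_i a i ^+ 2 + \sum_i a i * \sum_(j | j != i) a j.
  rewrite expr2 mulr_suml -big_split /=; apply: eq_bigr => i _.
  by rewrite (bigD1 i) //= mulrDr expr2.
have Hb : 0 <= \sum_i b i ^+ 2 by apply: sumr_ge0 => i _; apply: sqr_ge0.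
have Hp : 0 < \sum_i a i * \sum_(j | j != i) a j.
  pose i0 : 'I_k := Ordinal k0; pose i1 : 'I_k := Ordinal k1.
  apply: (@sum_pos _ _ xpredT _ i0) => //.
    move=> i _; apply: mulr_ge0; first exact/ltW/apos.
    by apply: sumr_ge0 => j _; apply/ltW/apos.
  apply: mulr_gt0; first exact: apos.
  apply: (@sum_pos _ _ _ _ i1) => //.
    by move=> j _; apply/ltW/apos.
  exact: apos.
rewrite /a /b in Hsq Hb Hp.
rewrite sumrB Hsq; lra.
Qed.

Lemma stable_root_le (R : rcfType) k (A : 'M[R]_k) : (0 < k)%N -> Cstable A ->
  forall x, root (char_poly A) x -> x <= \tr A.
Proof.
move=> k0 st x rx.
have [t [ch tr1 tr2]] := spectral _ _ A k0.
have apos : forall i, 0 < complex.Re (t i).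
  move=> i; have := st (t i); rewrite ch root_prodX => /(_ isT).
  by rewrite -complexRe ltcR.
have e1 : \tr A = \sum_i complex.Re (t i).
  by rewrite -raddf_sum -tr1.
have : root (char_poly (map_mx (real_complex R) A)) x%:C%C.
  by rewrite -map_char_poly rmorph_root.
rewrite ch /root horner_prod prodf_seq_eq0 => /hasP [i _].
rewrite !hornerE subr_eq0 => /eqP xi.
have -> : x = complex.Re (t i) by rewrite -xi.
rewrite e1 (bigD1 i) //= lerDl; apply: sumr_ge0 => j _; exact/ltW/apos.
Qed.
Lemma ex_min (R : realDomainType) (I : finType) (i0 : I) (F : I -> R) :
  exists m, forall i, F m <= F i.
Proof.
case: (@arg_minP _ _ I i0 xpredT F isT) => m _ H; exists m => i; exact: H.
Qed.
Lemma hp (R : comNzRingType) k (B : 'M[R]_k) t :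
  map_mx (horner_eval t) (char_poly_mx B) = t%:M - B.
Proof.
apply/matrixP => i j; rewrite !mxE; case: (i == j) => /=; rewrite /horner_eval ?mulr1n ?mulr0n hornerD hornerN hornerC ?hornerX ?horner0 //.
Qed.

Lemma perron (R : rcfType) k (B : 'M[R]_k) (r : R) : (0 < k)%N ->
  (forall i j, 0 <= B i j) -> (forall i, r <= \sum_j B i j) ->
  (forall x, r <= x -> ~~ root (char_poly B) x) -> False.
Proof.
move=> k0 Bge0 rowr noroot.
pose i0 : 'I_k := Ordinal k0.
pose rho i := \sum_j B i j.
pose T := r + \sum_i (rho i - r).
have rhoT : forall i, rho i <= T.
  move=> i; rewrite /T (bigD1 i) //=.
  have : 0 <= \sum_(j | j != i) (rho j - r).
    by apply: sumr_ge0 => j _; rewrite subr_ge0 rowr.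
  lra.
have rT : r <= T by apply: le_trans (rowr i0) (rhoT i0).
set p := char_poly B.
pose N := \adj (char_poly_mx B).
pose w j := \sum_l N j l.
have Nev : forall t j l, (N j l).[t] = \adj (t%:M - B) j l.
  by move=> t j l; rewrite -hp -map_mx_adj [in RHS]mxE.
have pev : forall t, p.[t] = \det (t%:M - B).
  by move=> t; rewrite /p /char_poly -horner_evalE -det_map_mx hp.
have eqn : forall t i, t * (w i).[t] - \sum_j B i j * (w j).[t] = p.[t].
  move=> t i.
  have := congr1 (fun M => (M *m (const_mx 1 : 'cV_k)) i ord0) (mul_mx_adj (t%:M - B)).
  rewrite /= -mulmxA mulmxBl mul_scalar_mx mul_scalar_mx !mxE -pev mulr1 => <-.
  rewrite /w horner_sum; congr (_ * _ - _).
    by apply: eq_bigr => l _; rewrite Nev !mxE mulr1.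
  apply: eq_bigr => j _; rewrite !mxE horner_sum; congr (_ * _).
  by apply: eq_bigr => l _; rewrite Nev !mxE mulr1.
have c0 : p.[r] != 0 by apply: noroot.
set c := p.[r] in c0.
pose V t j := c * (w j).[t].
pose vp j := c *: w j.
have vpE : forall t j, (vp j).[t] = V t j by move=> t j; rewrite hornerZ.
have eqv : forall t i, t * V t i - \sum_j B i j * V t j = c * p.[t].
  move=> t i; rewrite -(eqn t i) /V mulrBr; congr (_ - _); first by ring.
  by rewrite mulr_sumr; apply: eq_bigr => j _; ring.
have cpos : forall t, r <= t -> t <= T -> 0 < c * p.[t].
  move=> t rt tT.
  have : {in `[r, T], forall x, ~~ root p x}.
    by move=> x; rewrite in_itv /= => /andP[rx _]; apply: noroot.
  move/polyrN0_itv => /(_ r t).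
  rewrite !in_itv /= lexx rT rt tT => /(_ isT isT) sgE.
  by rewrite -(sgr_cp0 _).1.1 sgrM sgE -expr2 sqr_sg c0.
have minineq : forall t m, (forall i, V t m <= V t i) ->
    rho m * V t m <= \sum_j B m j * V t j.
  move=> t m Hm; rewrite /rho mulr_suml; apply: ler_sum => j _.
  by apply: ler_wpM2l.
have H1 : forall t, r <= t -> t <= T -> (forall i, 0 <= V t i) ->
    forall j, 0 < V t j.
  move=> t rt tT H j; rewrite lt_def H andbT; apply/eqP => V0.
  have := eqv t j; rewrite V0 mulr0 sub0r.
  have : 0 <= \sum_l B j l * V t l.
    by apply: sumr_ge0 => l _; apply: mulr_ge0.
  have := cpos t rt tT; lra.
have H2 : forall j, 0 < V T j.
  have [m Hm] := ex_min _ _ i0 (V T).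
  suff : 0 < V T m by move=> Vm j; apply: lt_le_trans Vm (Hm j).
  rewrite ltNge; apply/negP => Vm.
  have h1 := minineq T m Hm.
  have h2 : (T - rho m) * V T m <= 0.
    by apply: mulr_ge0_le0 => //; rewrite subr_ge0.
  rewrite mulrBl in h2.
  have := eqv T m; have := cpos T rT (lexx T); lra.
have H3 : exists j, V r j < 0.
  case: (boolP [exists j, V r j < 0]) => [/existsP //|/existsPn Hn].
  exfalso.
  have [m Hm] := ex_min _ _ i0 (V r).
  have Vm : 0 <= V r m by rewrite leNgt; apply: Hn.
  have h1 := minineq r m Hm.
  have h2 : (r - rho m) * V r m <= 0.
    by apply: mulr_le0_ge0 => //; rewrite subr_le0 /rho.
  rewrite mulrBl in h2.
  have := eqv r m; have := cpos r (lexx r) rT; lra.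
have [j Vj] := H3.
have VjT := H2 j.
have rlt : r < T.
  rewrite lt_neqAle rT andbT; apply/eqP => rTe.
  by move: VjT; rewrite -rTe; lra.
pose P := \prod_j vp j.
have PT : 0 < P.[T].
  by rewrite horner_prod; apply: prodr_gt0 => i _; rewrite vpE.
have P0 : P != 0 by apply: contraTneq PT => ->; rewrite horner0 ltxx.
have rootvp : forall i x, root (vp i) x -> root P x.
  move=> i x; rewrite /root horner_prod (bigD1 i) //= => /eqP ->.
  by rewrite mul0r.
have neg : forall i y, V y i < 0 -> (vp i).[y] * (vp i).[T] < 0.
  move=> i y Vi; rewrite !vpE.
  have Vi' : 0 < - V y i by rewrite oppr_gt0.
  have := mulr_gt0 Vi' (H2 i); rewrite mulNr; lra.
have [x xin rx] := poly_ivtoo (ltW rlt) (neg j r Vj).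
case: (prev_rootP P r T) => [P0'|y _ Py yin ny|c' _ _ nr].
- by rewrite P0' eqxx in P0.
- move: yin; rewrite in_itv /= => /andP[ry yT].
  have Vy : forall i, 0 <= V y i.
    move=> i; rewrite leNgt; apply/negP => Vi.
    have [z zin rz] := poly_ivtoo (ltW yT) (neg i y Vi).
    by have := ny z zin; rewrite (rootvp i z rz).
  have Hpos := H1 y (ltW ry) (ltW yT) Vy.
  have : 0 < P.[y].
    by rewrite horner_prod; apply: prodr_gt0 => i _; rewrite vpE.
  by rewrite Py ltxx.
- by have := nr x xin; rewrite (rootvp j x rx).
Qed.
Lemma ImW_ctln (R : rcfType) n (e : rel 'I_n) (eps delta : R) (s : {set 'I_n}) i j :
  ImW (ctln e eps delta) s i j = if i == j then 1 else if e (enum_val j) (enum_val i) then 1 - eps else 1 + delta.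
Proof.
rewrite /ImW /subm !mxE (inj_eq enum_val_inj).
by case: (i == j) => //=; rewrite ?subr0 //; case: (e _ _); ring.
Qed.

Lemma sum_delta (R : nzRingType) k (i : 'I_k) : \sum_j ((i == j)%:R : R) = 1.
Proof.
rewrite (bigD1 i) //= eqxx big1 ?addr0 // => j ji.
by rewrite eq_sym (negbTE ji).
Qed.

Lemma sum_bool (R : nzRingType) (I : finType) (P : pred I) :
  \sum_j ((P j)%:R : R) = (#|[pred j | P j]|)%:R.
Proof. rewrite -sum1_card natr_sum [RHS]big_mkcond; apply: eq_bigr => j _; rewrite inE; by case: (P j). Qed.

Lemma cnt_le (n : nat) (e : rel 'I_n) (s : {set 'I_n}) d (Hd : max_indeg e s = d)
  (i : 'I_#|s|) :
  (#|[pred j : ('I_#|s|) | e (enum_val j) (enum_val i)]| <= d)%N.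
Proof.
apply: (@leq_trans (indeg e s (enum_val i))); last first.
  by rewrite -Hd /max_indeg; apply: (leq_bigmax_cond (F := indeg e s)); apply: enum_valP.
rewrite /indeg -(card_imset _ enum_val_inj); apply: subset_leq_card.
apply/subsetP => x /imsetP [j Pj ->]; rewrite inE enum_valP /=.
by move: Pj; rewrite inE.
Qed.

Lemma rowsum_bound (R : rcfType) n (e : rel 'I_n) (He : irreflexive e)
  (eps delta : R) (s : {set 'I_n}) d (Hd : max_indeg e s = d) i :
  0 <= eps + delta ->
  #|s|%:R * (1 + delta) - delta - (eps + delta) * d%:R <=
  \sum_j ImW (ctln e eps delta) s i j.
Proof.
move=> ed.
have E : forall j, ImW (ctln e eps delta) s i j =
   (1 + delta) - delta * (i == j)%:R - (eps + delta) * (e (enum_val j) (enum_val i))%:R.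
  move=> j; rewrite ImW_ctln; case: eqP => [->|_]; first by rewrite He /=; ring.
  by case: (e _ _) => /=; ring.
rewrite (eq_bigr _ (fun j _ => E j)) !sumrB -!mulr_sumr sum_delta sumr_const card_ord.
have cnt : \sum_(j < #|s|) ((e (enum_val j) (enum_val i))%:R : R) =
    (#|[pred j : ('I_#|s|) | e (enum_val j) (enum_val i)]|)%:R.
  exact: (sum_bool R _ (fun j : ('I_#|s|) => e (enum_val j) (enum_val i))).
rewrite cnt mulr_natr mulr1.
have : (#|[pred j : ('I_#|s|) | e (enum_val j) (enum_val i)]|%:R : R) <= d%:R.
  by rewrite ler_nat; apply: cnt_le.
move=> h; have := ler_wpM2l ed h.
rewrite -mulr_natl; lra.
Qed.

Lemma eps_lt1 (R : rcfType) (eps delta : R) : legal eps delta -> eps < 1.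
Proof.
move=> [d0 [e0 el]].
have h : eps * (delta + 1) < delta by rewrite -ltr_pdivlMr // ltr_wpDr.
rewrite mulrDr mulr1 in h.
rewrite ltNge; apply/negP => e1.
have : delta <= eps * delta by rewrite ler_peMl // ltW.
lra.
Qed.

Lemma trA_k (R : rcfType) n (e : rel 'I_n) (eps delta : R) (s : {set 'I_n}) :
  \tr (ImW (ctln e eps delta) s) = #|s|%:R.
Proof.
rewrite /mxtrace; under eq_bigr do rewrite ImW_ctln eqxx.
by rewrite sumr_const card_ord.
Qed.

Lemma part2 (R : rcfType) n (e : rel 'I_n) (He : irreflexive e) (s : {set 'I_n})
  d (Hd : max_indeg e s = d) (hd : (d < #|s| - 1)%N) (eps delta theta : R) :
  legal eps delta -> delta > eps * d%:R / (#|s| - 1 - d)%:R ->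
  ~ stable_motif (ctln e eps delta) s theta.
Proof.
move=> leg hdel [_ st].
have e1 := eps_lt1 _ _ _ leg.
case: leg => [d0 [e0 el]].
set A := ImW (ctln e eps delta) s.
have k0 : (0 < #|s|)%N by move: hd; case: #|s|.
have cst : Cstable A by move=> lam; apply: st.
have trA : \tr A = #|s|%:R by apply: trA_k.
set m := (#|s| - 1 - d)%N in hdel.
have m0 : (0 < m)%N by rewrite /m subn_gt0.
have km : #|s| = (m + d).+1 by rewrite /m; move: hd; clear; lia.
have hdel' : eps * d%:R < delta * m%:R by rewrite -ltr_pdivrMr // ltr0n.
pose r := #|s|%:R * (1 + delta) - delta - (eps + delta) * d%:R.
have rk : r - #|s|%:R = delta * m%:R - eps * d%:R.
  by rewrite /r km -addn1 !natrD; ring.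
apply: (perron _ _ A r k0).
- move=> i j; rewrite ImW_ctln; case: (i == j) => //; case: (e _ _).
  + by rewrite subr_ge0 ltW.
  + by rewrite addr_ge0 // ltW.
- move=> i; apply: (rowsum_bound _ _ _ He _ _ _ _ Hd i); rewrite addr_ge0 // ltW //.
- move=> x rx; apply/negP => rtx.
  have := stable_root_le _ _ A k0 cst x rtx; rewrite trA; lra.
Qed.

Lemma sum_le_one (R : realDomainType) (I : finType) (F : I -> R) j :
  (forall i, F i <= 0) -> \sum_i F i <= F j.
Proof.
move=> H; rewrite (bigD1 j) //= gerDl; apply: sumr_le0 => i _; exact: H.
Qed.

Lemma sum_le_two (R : realDomainType) (I : finType) (F : I -> R) j1 j2 :
  j1 != j2 -> (forall i, F i <= 0) -> \sum_i F i <= F j1 + F j2.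
Proof.
move=> j12 H; rewrite (bigD1 j1) //= (bigD1 j2) 1?eq_sym //= addrA gerDl.
apply: sumr_le0 => i _; exact: H.
Qed.

Lemma sum_neq (R : nzRingType) k (i : 'I_k) : \sum_j ((i != j)%:R : R) = k%:R - 1.
Proof.
have -> : \sum_j ((i != j)%:R : R) = \sum_j (1 - (i == j)%:R).
  by apply: eq_bigr => j _; case: (i == j); rewrite ?subrr ?subr0.
by rewrite sumrB sum_delta sumr_const card_ord.
Qed.

Lemma part1 (R : rcfType) n (e : rel 'I_n) (He : irreflexive e) (s : {set 'I_n})
  (eps delta theta : R) :
  ~ clique e s -> legal eps delta ->
  delta > eps / (1 - eps) * (#|s|%:R ^+ 2 - #|s|%:R - 1) ->
  ~ stable_motif (ctln e eps delta) s theta.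
Proof.
move=> ncl leg hdel [_ st].
have e1 := eps_lt1 _ _ _ leg.
case: leg => [d0 [e0 el]].
have : ~~ [forall x, forall y, (x \in s) ==> (y \in s) ==> (x != y) ==> (e x y && e y x)].
  apply/negP => /forallP H; apply: ncl => i j iS jS ij.
  by move: (H i) => /forallP /(_ j); rewrite iS jS ij /= => /andP[].
move=> /forallPn [x /forallPn [y]]; rewrite !negb_imply => /and4P[xs ys xy nexy].
set A := ImW (ctln e eps delta) s.
pose i0 := enum_rank_in xs x; pose j0 := enum_rank_in xs y.
have vi0 : enum_val i0 = x by apply: enum_rankK_in.
have vj0 : enum_val j0 = y by apply: enum_rankK_in.
have ij0 : i0 != j0 by apply: contraNneq xy => h; rewrite -vi0 -vj0 h.
have k1 : (1 < #|s|)%N.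
  have : (i0 < #|s|)%N := ltn_ord i0.
  have : (j0 < #|s|)%N := ltn_ord j0.
  have : (nat_of_ord i0 <> nat_of_ord j0).
    by move=> h; move/negP: ij0; apply; apply/eqP/val_inj.
  clear; lia.
have cst : Cstable A by move=> lam; apply: st.
have E2 := stable_E2 _ _ A k1 cst.
pose K : R := #|s|%:R.
pose f i j := 1 - A i j * A j i.
have trA : \tr A = K by apply: trA_k.
have Ef : (\tr A) ^+ 2 - \tr (A *m A) = \sum_i \sum_j f i j.
  rewrite trA /f /mxtrace; under [in RHS]eq_bigr do rewrite sumrB.
  rewrite sumrB; congr (_ - _); last by apply: eq_bigr => i _; rewrite mxE.
  by rewrite sumr_const sumr_const card_ord /K expr2 mulr_natr.
have Agt : forall i j, i != j -> 1 - eps <= A i j.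
  move=> i j ij; rewrite /A ImW_ctln (negbTE ij); case: (e _ _) => //.
  lra.
have fle : forall i j, f i j <= 2 * eps * (i != j)%:R.
  move=> i j; rewrite /f; case: (eqVneq i j) => [->|ij] /=.
    by rewrite /A ImW_ctln eqxx mul1r subrr mulr0.
  have h : (1 - eps) * (1 - eps) <= A i j * A j i.
    apply: ler_pM; [lra|lra|exact: Agt|apply: Agt; by rewrite eq_sym].
  have : 0 <= eps * eps by apply: mulr_ge0; apply: ltW.
  rewrite mulr1; move: h; rewrite mulrBr !mulrBl !mulr1 mul1r; lra.
have f0 : f i0 j0 <= eps - delta + delta * eps.
  rewrite /f /A !ImW_ctln (negbTE ij0) eq_sym (negbTE ij0) vi0 vj0.
  have : 0 <= delta * delta by apply: mulr_ge0; apply: ltW.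
  have : 0 <= delta * eps by apply: mulr_ge0; apply: ltW.
  move: nexy; case: (e x y); case: (e y x) => //= _ h1 h2.
  - nra.
  - nra.
  - nra.
have f1 : f j0 i0 = f i0 j0 by rewrite /f mulrC.
pose h i j := f i j - 2 * eps * (i != j)%:R.
have hle : forall i j, h i j <= 0 by move=> i j; rewrite /h subr_le0.
have Sh : \sum_i \sum_j h i j <= h i0 j0 + h j0 i0.
  apply: le_trans (sum_le_two _ _ _ _ _ ij0 _) _.
    by move=> i; apply: sumr_le0 => j _.
  apply: lerD; exact: sum_le_one.
have Sf : \sum_i \sum_j f i j = \sum_i \sum_j h i j + 2 * eps * (K * (K - 1)).
  have -> : \sum_i \sum_j f i j = \sum_i \sum_j (h i j + 2 * eps * (i != j)%:R).
    by apply: eq_bigr => i _; apply: eq_bigr => j _; rewrite /h subrK.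
  under eq_bigr do rewrite big_split /= -mulr_sumr sum_neq.
  rewrite big_split /= sumr_const card_ord -mulr_natr /K; ring.
have hij : h i0 j0 = f i0 j0 - 2 * eps by rewrite /h ij0 mulr1.
have hji : h j0 i0 = f i0 j0 - 2 * eps by rewrite /h eq_sym ij0 mulr1 f1.
have hq : eps * (K ^+ 2 - K - 1) < delta * (1 - eps).
  by rewrite -ltr_pdivrMr ?subr_gt0 // mulrAC.
have id : 2 * (eps - delta + delta * eps - 2 * eps) + 2 * eps * (K * (K - 1)) =
   2 * (eps * (K ^+ 2 - K - 1) - delta * (1 - eps)) by ring.
rewrite Ef Sf in E2.
lra.
Qed.

Theorem theorem2 (R : rcfType) (n : nat) (e : rel 'I_n) (He : simple_digraph e)
  (s : {set 'I_n}) :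
  (~ clique e s ->
    forall (eps delta theta : R),
      legal eps delta -> 0 < theta -> ctln_nondeg (ctln e eps delta) theta ->
      delta > eps / (1 - eps) * (#|s|%:R ^+ 2 - #|s|%:R - 1) ->
      ~ stable_motif (ctln e eps delta) s theta) /\
  (forall d : nat, max_indeg e s = d -> (d < #|s| - 1)%N ->
    forall (eps delta theta : R),
      legal eps delta -> 0 < theta -> ctln_nondeg (ctln e eps delta) theta ->
      delta > eps * d%:R / (#|s| - 1 - d)%:R ->
      ~ stable_motif (ctln e eps delta) s theta).
Proof.
split.
- move=> ncl eps delta theta leg _ _ hdel.
  exact: (part1 R n e He s eps delta theta ncl leg hdel).
- move=> d Hd hd eps delta theta leg _ _ hdel.
  exact: (part2 R n e He s d Hd hd eps delta theta leg hdel).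
Qed.
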